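(* Let $M$ be a semiprime (or prime) right $R$-module such that $S=\mathrm{End}_R(M)$ satisfies the ascending chain condition on principal left ideals. Then the following are equivalent: (i) $M$ is a quasi-Baer module; (ii) $M$ is an endo-AIP module; (iii) $M$ is a centrally endo-AIP module.
   Context: For $N\le M$, $l_S(N)=\{\phi\in S:\phi(N)=0\}$. A fully invariant submodule $N$ of $M$ is prime in $M$ if for every ideal $T$ of $S$ and every fully invariant submodule $N'$ of $M$, $T(N')\subseteq N$ implies $T(M)\subseteq N$ or $N'\subseteq N$; $N$ is semiprime if it is an intersection of prime submodules of $M$. $M$ is a prime (semiprime) module if $\{0\}$ is prime (semiprime) in $M$. $M$ is quasi-Baer if $l_S(N)$ is a direct summand of $S$ (i.e. $l_S(N)=Se$ for an idempotent $e$) for every fully invariant submodule $N$. An ideal $I$ of $S$ is right s-unital if for every $a\in I$ there is $x\in I$ with $ax=a$, and centrally s-unital if for every $a\in I$ there is $z\in I$ central in $S$ with $az=a$. $M$ is endo-AIP (resp. centrally endo-AIP) if $l_S(N)$ is right s-unital (resp. centrally s-unital) for every fully invariant submodule $N$ of $M$. *)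

(* Defs.v *)
(* A right R-module is modelled as a left module over the
   converse ring R^c (so  r *: m  means  m·r). Endomorphisms act on the left,
   and the product in S = End_R(M) is composition: (phi psi)(m) = phi (psi m). *)
From HB Require Import structures.
From mathcomp Require Import all_boot all_order all_algebra.
Set Implicit Arguments. Unset Strict Implicit. Unset Printing Implicit Defensive.
Import GRing.Theory.
Local Open Scope ring_scope.

Section ModuleTheory.
Variables (R : nzRingType) (M : lmodType R^c).

Definition is_endo (f : M -> M) : Prop :=
  (forall x y, f (x + y) = f x + f y) /\ (forall (a : R^c) x, f (a *: x) = a *: f x).

Definition submodule (N : M -> Prop) : Prop :=
  N 0 /\ (forall x y, N x -> N y -> N (x + y)) /\ (forall (a : R^c) x, N x -> N (a *: x)).

Definition fully_invariant (N : M -> Prop) : Prop :=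
  submodule N /\ forall f, is_endo f -> forall x, N x -> N (f x).

Definition lS (N : M -> Prop) (f : M -> M) : Prop :=
  is_endo f /\ forall x, N x -> f x = 0.

Definition ideal (T : (M -> M) -> Prop) : Prop :=
  (forall f, T f -> is_endo f) /\ T (fun _ => 0) /\
  (forall f g, T f -> T g -> T (fun x => f x + g x)) /\
  (forall f, T f -> T (fun x => - f x)) /\
  (forall f g, is_endo g -> T f -> T (g \o f) /\ T (f \o g)).

Definition gen (A : M -> Prop) (x : M) : Prop :=
  forall N, submodule N -> (forall y, A y -> N y) -> N x.

Definition apply_ideal (T : (M -> M) -> Prop) (N : M -> Prop) : M -> Prop :=
  gen (fun y => exists f n, T f /\ N n /\ y = f n).

Definition subset (A B : M -> Prop) : Prop := forall x, A x -> B x.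

Definition prime_in (N : M -> Prop) : Prop :=
  fully_invariant N /\
  forall T N', ideal T -> fully_invariant N' ->
    subset (apply_ideal T N') N ->
    subset (apply_ideal T (fun _ => True)) N \/ subset N' N.

Definition semiprime_in (N : M -> Prop) : Prop :=
  fully_invariant N /\
  exists P : (M -> Prop) -> Prop,
    (forall Q, P Q -> prime_in Q) /\
    forall x, N x <-> (forall Q, P Q -> Q x).

Definition zero_sub : M -> Prop := fun x => x = 0.

Definition prime_module : Prop := prime_in zero_sub.
Definition semiprime_module : Prop := semiprime_in zero_sub.

Definition idempotent_endo (e : M -> M) : Prop := is_endo e /\ e \o e = e.

Definition principal_left (a : M -> M) (f : M -> M) : Prop :=
  exists g, is_endo g /\ f = g \o a.

Definition quasi_Baer : Prop :=
  forall N, fully_invariant N ->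
    exists e, idempotent_endo e /\
      forall f, lS N f <-> principal_left e f.

Definition right_s_unital (I : (M -> M) -> Prop) : Prop :=
  forall a, I a -> exists x, I x /\ a \o x = a.

Definition central (z : M -> M) : Prop :=
  forall s, is_endo s -> s \o z = z \o s.

Definition centrally_s_unital (I : (M -> M) -> Prop) : Prop :=
  forall a, I a -> exists z, I z /\ central z /\ a \o z = a.

Definition endo_AIP : Prop :=
  forall N, fully_invariant N -> right_s_unital (lS N).

Definition centrally_endo_AIP : Prop :=
  forall N, fully_invariant N -> centrally_s_unital (lS N).

Definition acc_principal_left : Prop :=
  forall a : nat -> (M -> M), (forall n, is_endo (a n)) ->
    (forall n f, principal_left (a n) f -> principal_left (a n.+1) f) ->
    exists k, forall m, (k <= m)%N -> forall f,
      principal_left (a m) f -> principal_left (a k) f.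

End ModuleTheory.

(* Main.v *)
Require Import Defs.
From mathcomp Require Import all_boot all_order all_algebra.
From Stdlib Require Import FunctionalExtensionality ClassicalEpsilon Classical.
Set Implicit Arguments. Unset Strict Implicit. Unset Printing Implicit Defensive.
Import GRing.Theory.
Local Open Scope ring_scope.

Section Aux.
Variables (R : nzRingType) (M : lmodType R^c).
Implicit Types f g : M -> M.

Lemma endo0 f : is_endo f -> f 0 = 0.
Proof. move=> [Ha _]; apply: (addrI (f 0)); by rewrite -Ha !addr0. Qed.

Lemma endoN f x : is_endo f -> f (- x) = - f x.
Proof.
move=> hf; apply: (addrI (f x)); rewrite -(proj1 hf) !subrr; exact: endo0.
Qed.

Lemma endoB f x y : is_endo f -> f (x - y) = f x - f y.
Proof. by move=> hf; rewrite (proj1 hf) endoN. Qed.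

Lemma endo_id : is_endo (M:=M) id.
Proof. by split. Qed.

Lemma endo_comp f g : is_endo f -> is_endo g -> is_endo (f \o g).
Proof.
move=> [f1 f2] [g1 g2]; split=> [x y|a x] /=; by rewrite ?g1 ?f1 ?g2 ?f2.
Qed.

Lemma lS_ideal (N : M -> Prop) : fully_invariant N -> ideal (lS N).
Proof.
move=> [[N0 [N1 N2]] Ninv]; split; first by move=> f [].
split; first by split; [by split=> *; rewrite ?addr0 ?scaler0 | by []].
split.
  move=> f g [hf Hf] [hg Hg]; split.
    split=> [x y|a x]; first by rewrite hf.1 hg.1 addrACA.
    by rewrite hf.2 hg.2 scalerDr.
  by move=> x Nx; rewrite Hf // Hg // addr0.
split.
  move=> f [hf Hf]; split.
    split=> [x y|a x]; first by rewrite hf.1 opprD.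
    by rewrite hf.2 scalerN.
  by move=> x Nx; rewrite Hf // oppr0.
move=> f g hg [hf Hf]; split; split; try exact: endo_comp.
  by move=> x Nx /=; rewrite Hf // endo0.
by move=> x Nx /=; rewrite Hf //; apply: Ninv.
Qed.

Lemma gen_submodule (A : M -> Prop) : submodule (gen A).
Proof.
split; first by move=> N [N0 _] _.
split.
  move=> x y Hx Hy N hN HA; have [_ [N1 _]] := hN; apply: N1; [exact: Hx|exact: Hy].
move=> a x Hx N hN HA; have [_ [_ N2]] := hN; apply: N2; exact: Hx.
Qed.

Lemma gen_in (A : M -> Prop) y : A y -> gen A y.
Proof. by move=> Ay N _ HA; apply: HA. Qed.

Lemma apply_ideal_fi (T : (M -> M) -> Prop) : ideal T -> fully_invariant (apply_ideal T (fun _ => True)).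
Proof.
move=> hT; split; first exact: gen_submodule.
move=> f hf x Hx.
have [G0 [G1 G2]] := gen_submodule (fun y => exists f n, T f /\ True /\ y = f n).
apply: (Hx (fun y => apply_ideal T (fun _ => True) (f y))).
  split; first by rewrite endo0.
  split; first by move=> u v Hu Hv; rewrite hf.1; apply: G1.
  by move=> a u Hu; rewrite hf.2; apply: G2.
move=> y [g [n [Tg [_ ->]]]]; apply: gen_in; exists (f \o g), n; split=> //.
have [_ [_ [_ [_ Hc]]]] := hT; exact: (Hc g f hf Tg).1.
Qed.

Definition sp_or_p := semiprime_module M \/ prime_module M.

Lemma key : sp_or_p -> forall (T : (M -> M) -> Prop) (L : M -> Prop), ideal T -> fully_invariant L ->
  (forall f n, T f -> L n -> f n = 0) ->
  Defs.subset L (apply_ideal T (fun _ => True)) -> Defs.subset L (zero_sub (M:=M)).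
Proof.
move=> Hsp T L hT hL H0 HLT.
have TLQ : forall Q : M -> Prop, submodule Q -> Defs.subset (apply_ideal T L) Q.
  move=> Q hQ x Hx; apply: Hx => // y [f [n [Tf [Ln ->]]]].
  by rewrite H0 //; case: hQ.
case: Hsp => [[_ [P [HP Hiff]]] | [_ Hp]].
  move=> x Lx; apply/Hiff => Q PQ.
  have [[hQ _] Hq] := HP Q PQ.
  case: (Hq T L hT hL (TLQ Q hQ)) => [H1|H2]; last exact: H2.
  exact: H1 (HLT _ Lx).
have hz : submodule (zero_sub (M:=M)).
  rewrite /zero_sub; split=> //; split; first by move=> x y -> ->; rewrite addr0.
  by move=> a x ->; rewrite scaler0.
case: (Hp T L hT hL (TLQ _ hz)) => [H1|H2]; last exact: H2.
by move=> x Lx; apply: H1 (HLT _ Lx).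
Qed.


Lemma qb_caip : sp_or_p -> quasi_Baer M -> centrally_endo_AIP M.
Proof.
move=> Hsp Hqb N HN a Ha.
have [e [[He Hee] HeI]] := Hqb N HN.
have hI := lS_ideal HN.
have [_ [hI0 [hIadd [hIneg hIc]]]] := hI.
have eI : lS N e by apply/HeI; exists id; split; [exact: endo_id | by []].
have eex : forall x, e (e x) = e x by move=> x; exact: (congr1 (fun h => h x) Hee).
have ker : forall f, lS N f -> forall n, e n = 0 -> f n = 0.
  move=> f /HeI [g [hg ->]] n /= ->; exact: endo0.
exists e; split=> //; split.
  move=> s hs; apply: functional_extensionality => x /=.
  have H1 : e (s x) = e (s (e x)).
    have /HeI [g [hg Hg]] := (hIc e s hs eI).2.
    have := congr1 (fun h => h x) Hg; have := congr1 (fun h => h (e x)) Hg.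
    by rewrite /= eex => -> ->.
  pose TM := apply_ideal (lS N) (fun _ => True).
  have hTM := apply_ideal_fi hI.
  pose L := fun y => e y = 0 /\ TM y.
  have hL : fully_invariant L.
    have [[T0 [T1 T2]] Tinv] := hTM.
    split.
      split; first by split=> //; exact: endo0.
      split.
        by move=> u v [eu Tu] [ev Tv]; split; [rewrite He.1 eu ev addr0 | exact: T1].
      by move=> b u [eu Tu]; split; [rewrite He.2 eu scaler0 | exact: T2].
    move=> f hf y [ey Ty]; split; last exact: Tinv.
    have /HeI [g [hg Hg]] := (hIc e f hf eI).2.
    have := congr1 (fun h => h y) Hg; rewrite /= ey endo0 //.
  have H2 : s (e x) = e (s (e x)).
    apply/eqP; rewrite -subr_eq0; apply/eqP.
    apply: (key Hsp hI hL).
    - move=> f n fI [en _]; exact: ker.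
    - by move=> y [].
    split; first by rewrite endoB // eex subrr.
    apply: gen_in; exists (fun z => s (e z) - e (s (e z))), x; split=> //.
    have Ise : lS N (s \o e) := (hIc e s hs eI).1.
    exact: (hIadd _ _ Ise (hIneg _ (hIc _ e He Ise).1)).
  by rewrite H2 -H1.
have [g [hg Hg]] := (HeI a).1 Ha.
by rewrite Hg; apply: functional_extensionality => x /=; rewrite eex.
Qed.


Lemma aip_qb : acc_principal_left M -> endo_AIP M -> quasi_Baer M.
Proof.
move=> Hacc Haip N HN.
have hI := lS_ideal HN.
have [_ [hI0 [hIadd [hIneg hIc]]]] := hI.
have Hu := Haip N HN.
have endoI : forall f, lS N f -> is_endo f by move=> f [].
have two : forall a b, lS N a -> lS N b ->
    exists x, lS N x /\ a \o x = a /\ b \o x = b.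
  move=> a b Ia Ib.
  have [x1 [I1 H1]] := Hu a Ia.
  have Ic : lS N (fun y => b y + - (b \o x1) y).
    exact: (hIadd _ _ Ib (hIneg _ (hIc _ _ (endoI _ I1) Ib).2)).
  have [x2 [I2 H2]] := Hu _ Ic.
  exists (fun y => (fun y => x1 y + x2 y) y + - (x1 \o x2) y); split.
    exact: (hIadd _ _ (hIadd _ _ I1 I2) (hIneg _ (hIc _ _ (endoI _ I2) I1).2)).
  have H1' y : a (x1 y) = a y by exact: (congr1 (fun h => h y) H1).
  have H2' y : b (x2 y) - b (x1 (x2 y)) = b y - b (x1 y)
    by exact: (congr1 (fun h => h y) H2).
  have ha := endoI _ Ia; have hb := endoI _ Ib.
  split; apply: functional_extensionality => y /=.
    by rewrite endoB // ha.1 !H1' addrK.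
  rewrite endoB // hb.1 -addrA H2' addrC subrK //.
have Hmax : exists a, lS N a /\
    forall x, lS N x -> principal_left x a -> principal_left a x.
  apply: NNPP => Hn.
  have step : forall a, lS N a -> exists x,
      lS N x /\ principal_left x a /\ ~ principal_left a x.
    move=> a Ia; apply: NNPP => Hx; apply: Hn; exists a; split=> // x Ix Hxa.
    apply: NNPP => Hnot; apply: Hx; exists x; done.
  pose P a x := lS N x /\ principal_left x a /\ ~ principal_left a x.
  pose F a := epsilon (inhabits (fun _ : M => 0)) (P a).
  pose sq n := iter n F (fun _ => 0).
  have Isq : forall n, lS N (sq n).
    elim=> [|n IH]; first exact: hI0; exact: (epsilon_spec _ _ (step _ IH)).1.
  have Psq n : P (sq n) (sq n.+1) by exact: (epsilon_spec _ _ (step _ (Isq n))).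
  have Hch : forall n f, principal_left (sq n) f -> principal_left (sq n.+1) f.
    move=> n f [g [hg ->]]; have [_ [[h [hh Hh]] _]] := Psq n.
    exists (g \o h); split; first exact: endo_comp.
    by rewrite Hh.
  have [k Hk] := Hacc sq (fun n => endoI _ (Isq n)) Hch.
  have [_ [_ Hn2]] := Psq k; apply: Hn2; apply: (Hk k.+1) => //.
  by exists id; split; [exact: endo_id|].
have [a [Ia Hm]] := Hmax.
have [x0 [Ix0 Hax0]] := Hu a Ia.
have [s [hs Hx0]] : principal_left a x0.
  by apply: Hm => //; exists a; split; [exact: endoI|].
have Hax0' y : a (x0 y) = a y by exact: (congr1 (fun h => h y) Hax0).
exists x0; split.
  split; first exact: endoI.
  apply: functional_extensionality => y /=; by rewrite {1}Hx0 /= Hax0' Hx0.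
move=> f; split.
  move=> If; have [x [Ix [Hax Hfx]]] := two a f Ia If.
  have [t [ht Hxt]] : principal_left a x.
    by apply: Hm => //; exists a; split; [exact: endoI|].
  exists (f \o t \o a); split.
    by apply: endo_comp; [apply: endo_comp; [exact: endoI|]|exact: endoI].
  apply: functional_extensionality => y /=.
  have E1 := congr1 (fun h => h y) Hfx; have E2 := congr1 (fun h => h y) Hxt.
  simpl in E1, E2; by rewrite Hax0' -E1 E2.
by move=> [g [hg ->]]; exact: (hIc _ _ hg Ix0).1.
Qed.

End Aux.

Theorem proposition3p10 (R : nzRingType) (M : lmodType R^c) :
  (semiprime_module M \/ prime_module M) ->
  acc_principal_left M ->
  (quasi_Baer M <-> endo_AIP M) /\ (endo_AIP M <-> centrally_endo_AIP M).
Proof.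
move=> Hsp Hacc.
have c2a : centrally_endo_AIP M -> endo_AIP M.
  move=> H N HN a Ha; have [z [Iz [_ Haz]]] := H N HN a Ha; by exists z.
have q2c := qb_caip Hsp.
have a2q := aip_qb Hacc.
split; split; auto.
Qed.
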